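(* Let $\alpha\in[1/2,1)\cup(1,\infty)$ and let $p_{X,Y}=p_Xp_{Y\mid X}$ be a joint distribution on finite alphabets $\mathcal X\times\mathcal Y$. Starting from initial distributions $q_X^{(0)}$ on $\mathcal X$ and $q_Y^{(0)}$ on $\mathcal Y$, let $\{q_X^{(k)}\}_{k\ge0}$ and $\{q_Y^{(k)}\}_{k\ge0}$ be generated by the alternating optimization algorithm which, at each step, replaces $q_X$ by $$q_X^*(x)=\frac{\big[\sum_yp_{X,Y}(x,y)^\alpha q_Y(y)^{1-\alpha}\big]^{1/\alpha}}{\sum_{x'}\big[\sum_yp_{X,Y}(x',y)^\alpha q_Y(y)^{1-\alpha}\big]^{1/\alpha}}$$ computed from the current $q_Y$, and then replaces $q_Y$ by $$q_Y^*(y)=\frac{\big[\sum_xp_{X,Y}(x,y)^\alpha q_X(x)^{1-\alpha}\big]^{1/\alpha}}{\sum_{y'}\big[\sum_xp_{X,Y}(x,y')^\alpha q_X(x)^{1-\alpha}\big]^{1/\alpha}}$$ computed from the current $q_X$ (these are the exact minimizers of $D_\alpha(p_Xp_{Y\mid X}\|q_Xq_Y)$ in one argument with the other fixed). Then $$\lim_{k\to\infty}D_\alpha(p_Xp_{Y\mid X}\|q_X^{(k)}q_Y^{(k)})=I_\alpha^{\mathrm{LP}}(X;Y).$$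
   Context: $D_\alpha(p\|q):=\frac{1}{\alpha-1}\log\sum_zp(z)^\alpha q(z)^{1-\alpha}$ is the Rényi divergence of order $\alpha$, and the Lapidoth–Pfister mutual information is $I_\alpha^{\mathrm{LP}}(X;Y):=\min_{q_X}\min_{q_Y}D_\alpha(p_Xp_{Y\mid X}\|q_Xq_Y)$. *)

(* Defs.v *)
From HB Require Import structures.
From mathcomp Require Import all_boot all_order all_algebra.
From mathcomp Require Import all_classical all_reals all_analysis.
Set Implicit Arguments. Unset Strict Implicit. Unset Printing Implicit Defensive.
Import Order.TTheory GRing.Theory Num.Theory.
Local Open Scope classical_set_scope.
Local Open Scope ring_scope.

Definition is_dist (R : realType) (T : finType) (q : T -> R) : Prop :=
  (forall t, 0 <= q t) /\ \sum_(t : T) q t = 1.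

(* Renyi divergence of order alpha (alpha > 0, alpha <> 1), extended-real valued,
   with the standard conventions: the sum runs over the support of p
   (terms with p z = 0 vanish since 0 `^ alpha = 0); for alpha > 1 the
   divergence is +oo if q vanishes somewhere on the support of p; if the sum
   is 0 (only possible for alpha < 1, disjoint supports) the divergence is +oo. *)
Definition renyiD (R : realType) (T : finType) (alpha : R) (p q : T -> R) : \bar R :=
  if (1 < alpha) && [exists z, (0 < p z) && (q z == 0)] then +oo%E
  else let s := \sum_(z : T) (p z `^ alpha) * (q z `^ (1 - alpha)) in
       if s == 0 then +oo%E else ((alpha - 1)^-1 * ln s)%:E.

Definition renyiDXY (R : realType) (X Y : finType) (alpha : R)
  (p : X -> Y -> R) (qX : X -> R) (qY : Y -> R) : \bar R :=
  renyiD alpha (fun z : X * Y => p z.1 z.2) (fun z : X * Y => qX z.1 * qY z.2).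

(* Lapidoth--Pfister mutual information: min over q_X, q_Y (written as inf;
   the minimum is attained). *)
Definition I_LP (R : realType) (X Y : finType) (alpha : R) (p : X -> Y -> R) : \bar R :=
  ereal_inf [set d | exists qX : X -> R, exists qY : Y -> R,
     [/\ is_dist qX, is_dist qY & d = renyiDXY alpha p qX qY]].

Definition updX (R : realType) (X Y : finType) (alpha : R)
  (p : X -> Y -> R) (qY : Y -> R) : X -> R :=
  let g := fun x => (\sum_(y : Y) (p x y `^ alpha) * (qY y `^ (1 - alpha))) `^ (alpha^-1) in
  fun x => g x / \sum_(x' : X) g x'.

Definition updY (R : realType) (X Y : finType) (alpha : R)
  (p : X -> Y -> R) (qX : X -> R) : Y -> R :=
  let g := fun y => (\sum_(x : X) (p x y `^ alpha) * (qX x `^ (1 - alpha))) `^ (alpha^-1) in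
  fun y => g y / \sum_(y' : Y) g y'.

Definition ao_step (R : realType) (X Y : finType) (alpha : R) (p : X -> Y -> R)
  (q : (X -> R) * (Y -> R)) : (X -> R) * (Y -> R) :=
  let qX' := updX alpha p q.2 in (qX', updY alpha p qX').

Definition ao_iter (R : realType) (X Y : finType) (alpha : R) (p : X -> Y -> R)
  (qX0 : X -> R) (qY0 : Y -> R) (k : nat) : (X -> R) * (Y -> R) :=
  iter k (ao_step alpha p) (qX0, qY0).

(* Main.v *)
Require Import Defs.
From HB Require Import structures.
From mathcomp Require Import all_boot all_order all_algebra.
From mathcomp Require Import all_classical all_reals all_analysis.
From mathcomp Require Import ring lra.
Import Order.TTheory GRing.Theory Num.Theory.
Local Open Scope classical_set_scope.
Local Open Scope ring_scope.
Set Implicit Arguments. Unset Strict Implicit. Unset Printing Implicit Defensive.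
Section Basic.
Variable R : realType.
Implicit Types (a u v x y : R).

Lemma sum_ge_term (T : finType) (F : T -> R) i0 :
  (forall i, 0 <= F i) -> F i0 <= \sum_i F i.
Proof. by move=> F0; rewrite (bigD1 i0) //= lerDl sumr_ge0. Qed.

Lemma dist_le1 (T : finType) (q : T -> R) t : is_dist q -> q t <= 1.
Proof. by case=> q0 q1; rewrite -q1 sum_ge_term. Qed.

Lemma amgm a u v : 0 < a < 1 -> 0 <= u -> 0 <= v ->
  u `^ a * v `^ (1 - a) <= a * u + (1 - a) * v.
Proof.
move=> /andP[a0 a1] u0 v0.
have b0 : 0 < 1 - a by rewrite subr_gt0.
have := @conjugate_powR R (u `^ a) (v `^ (1 - a)) a^-1 (1 - a)^-1
  (powR_ge0 _ _) (powR_ge0 _ _).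
rewrite !invr_gt0 a0 b0 !invrK => /(_ isT isT).
rewrite addrC subrK => /(_ erefl).
rewrite -!powRrM !mulfV ?gt_eqF // !powRr1 //.
by rewrite (mulrC a) (mulrC (1 - a)).
Qed.

Lemma powR_antitone s x y : s < 0 -> 0 < x -> x <= y -> y `^ s <= x `^ s.
Proof.
move=> s0 x0 xy; have y0 : 0 < y by apply: lt_le_trans xy.
rewrite /powR !gt_eqF // ler_expR; apply: ler_wnM2l; first exact: ltW.
by rewrite ler_ln.
Qed.

Lemma amgm_rev a u v : 1 < a -> 0 <= u -> 0 < v ->
  a * u + (1 - a) * v <= u `^ a * v `^ (1 - a).
Proof.
move=> a1 u0 v0; have a0 : 0 < a by apply: lt_trans a1.
set w := u `^ a * v `^ (1 - a).
have w0 : 0 <= w by rewrite mulr_ge0 ?powR_ge0.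
have ai : 0 < a^-1 < 1 by rewrite invr_gt0 a0 /= invf_lt1.
have := amgm ai w0 (ltW v0).
have -> : w `^ a^-1 * v `^ (1 - a^-1) = u.
  rewrite /w powRM ?powR_ge0 // -!powRrM mulfV ?gt_eqF // powRr1 //.
  rewrite -mulrA -powRD; last by rewrite (gt_eqF v0) implybT.
  have -> : (1 - a) * a^-1 + (1 - a^-1) = 0.
    by rewrite mulrBl mul1r mulfV ?gt_eqF // addrA subrK subrr.
  by rewrite powRr0 mulr1.
move=> H.
have : a * u <= a * (a^-1 * w + (1 - a^-1) * v) by rewrite ler_pM2l.
rewrite mulrDr mulrA mulfV ?gt_eqF // mul1r mulrA mulrBr mulr1 mulfV ?gt_eqF //.
move=> H2; rewrite -lerBrDr; apply: le_trans H2 _.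
by rewrite -opprB mulNr addrC.
Qed.

End Basic.
Section AMGMsum.
Variable R : realType.
Variable alpha : R.
Hypothesis alpha0 : 0 < alpha.

Lemma sum_amgm (T : finType) (u a : T -> R) : alpha < 1 -> is_dist u -> is_dist a ->
  \sum_t u t `^ alpha * a t `^ (1 - alpha) <= 1.
Proof.
move=> a1 [u0 u1] [a0 a1'].
apply: le_trans (_ : \sum_t (alpha * u t + (1 - alpha) * a t) <= 1).
  by apply: ler_sum => t _; apply: amgm; rewrite ?alpha0 ?a1.
by rewrite big_split /= -!mulr_sumr u1 a1' !mulr1 subrKC.
Qed.

Lemma sum_amgm_rev (T : finType) (u a : T -> R) : 1 < alpha -> is_dist u -> is_dist a ->
  (forall t, 0 < u t -> 0 < a t) ->
  1 <= \sum_t u t `^ alpha * a t `^ (1 - alpha).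
Proof.
move=> a1 [u0 u1] [a0 a1'] ua.
apply: le_trans (_ : 1 <= \sum_t (alpha * u t + (1 - alpha) * a t)) _.
  by rewrite big_split /= -!mulr_sumr u1 a1' !mulr1 subrKC.
apply: ler_sum => t _.
have [at0|] := ltP 0 (a t); first by apply: amgm_rev.
move=> at0; have at0' : a t = 0 by apply/eqP; rewrite eq_le at0 a0.
have ut0 : u t = 0.
  apply/eqP; rewrite eq_le u0 andbT; rewrite leNgt; apply/negP => /ua.
  by rewrite at0' ltxx.
by rewrite ut0 at0' !mulr0 addr0 powR0 ?mul0r // gt_eqF.
Qed.

End AMGMsum.

Section XY.
Variable R : realType.
Variable alpha : R.
Variables (X Y : finType) (p : X -> Y -> R).
Hypothesis alpha0 : 0 < alpha.
Hypothesis alpha1 : alpha != 1.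
Hypothesis p0 : forall x y, 0 <= p x y.

Definition Sv (a : X -> R) (b : Y -> R) :=
  \sum_x \sum_y p x y `^ alpha * (a x `^ (1 - alpha) * b y `^ (1 - alpha)).
Definition Af (b : Y -> R) x := \sum_y p x y `^ alpha * b y `^ (1 - alpha).
Definition ga (b : Y -> R) x := Af b x `^ alpha^-1.
Definition Zs (b : Y -> R) := \sum_x ga b x.

Lemma updXE b x : updX alpha p b x = ga b x / Zs b.
Proof. by []. Qed.

Lemma Af_ge0 b x : 0 <= Af b x.
Proof. by apply: sumr_ge0 => y _; rewrite mulr_ge0 ?powR_ge0. Qed.

Lemma ga_ge0 b x : 0 <= ga b x.
Proof. exact: powR_ge0. Qed.

Lemma Zs_ge0 b : 0 <= Zs b.
Proof. by apply: sumr_ge0 => x _; apply: ga_ge0. Qed.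

Lemma Sv_Af a b : Sv a b = \sum_x a x `^ (1 - alpha) * Af b x.
Proof.
apply: eq_bigr => x _; rewrite /Af mulr_sumr; apply: eq_bigr => y _.
by rewrite mulrCA.
Qed.

Lemma Af_ga b x : Af b x = ga b x `^ alpha.
Proof. by rewrite /ga -powRrM mulVf ?gt_eqF // powRr1 // Af_ge0. Qed.

Lemma pxy_pow0 x y : ~ (0 < p x y) -> p x y `^ alpha = 0.
Proof.
move=> h; have -> : p x y = 0.
  by apply/eqP; rewrite eq_le p0 andbT leNgt; apply/negP.
by rewrite powR0 // gt_eqF.
Qed.

Lemma ga_gt0 b x y : (forall y, 0 <= b y) -> 0 < p x y -> 0 < b y -> 0 < ga b x.
Proof.
move=> b0 pxy by0; apply: powR_gt0.
apply: lt_le_trans (_ : 0 < p x y `^ alpha * b y `^ (1 - alpha)) _.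
  by rewrite mulr_gt0 ?powR_gt0.
by apply: (sum_ge_term (F := fun y => p x y `^ alpha * b y `^ (1 - alpha))) => z;
  rewrite mulr_ge0 ?powR_ge0.
Qed.

Lemma ga_supp0 b x : (forall y, ~ (0 < p x y)) -> ga b x = 0.
Proof.
move=> h; rewrite /ga /Af big1 ?powR0 ?invr_eq0 ?gt_eqF //.
by move=> y _; rewrite pxy_pow0 ?mul0r.
Qed.

Lemma ga_gt0_supp b x : 0 < ga b x -> exists y, 0 < p x y.
Proof.
move=> g0; apply: contrapT => h; move: g0; rewrite ga_supp0 ?ltxx //.
by move=> y py; apply: h; exists y.
Qed.

Lemma updX_supp0 b x : (forall y, ~ (0 < p x y)) -> updX alpha p b x = 0.
Proof. by move=> h; rewrite updXE ga_supp0 // mul0r. Qed.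

Lemma Zs_gt0 b x y : (forall y, 0 <= b y) -> 0 < p x y -> 0 < b y -> 0 < Zs b.
Proof.
move=> b0 pxy by0; apply: lt_le_trans (ga_gt0 b0 pxy by0) _.
by apply: (sum_ge_term (F := ga b)) => z; apply: ga_ge0.
Qed.

Lemma updX_ge0 b x : 0 <= updX alpha p b x.
Proof. by rewrite updXE divr_ge0 ?ga_ge0 ?Zs_ge0. Qed.

Lemma updX_dist b : 0 < Zs b -> is_dist (updX alpha p b).
Proof.
move=> Z0; split; first by move=> x; apply: updX_ge0.
by rewrite -mulr_suml mulfV ?gt_eqF.
Qed.

Lemma updX_pos b x y : (forall y, 0 <= b y) -> 0 < p x y -> 0 < b y ->
  0 < updX alpha p b x.
Proof.
move=> b0 pxy by0; rewrite updXE divr_gt0 ?(ga_gt0 b0 pxy by0) //.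
exact: (Zs_gt0 b0 pxy by0).
Qed.

Lemma Sv_factor a b : 0 < Zs b ->
  Sv a b = Zs b `^ alpha *
           \sum_x updX alpha p b x `^ alpha * a x `^ (1 - alpha).
Proof.
move=> Z0; rewrite Sv_Af mulr_sumr; apply: eq_bigr => x _.
rewrite updXE Af_ga powRM ?ga_ge0 ?invr_ge0 ?Zs_ge0 //.
rewrite mulrA mulrCA -powRM ?Zs_ge0 ?invr_ge0 ?Zs_ge0 //.
by rewrite mulfV ?gt_eqF // powR1 mulr1 mulrC.
Qed.

Lemma Sv_upd b : 0 < Zs b -> Sv (updX alpha p b) b = Zs b `^ alpha.
Proof.
move=> Z0; rewrite Sv_factor // (eq_bigr (fun x => updX alpha p b x)).
  by case: (updX_dist Z0) => _ ->; rewrite mulr1.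
move=> x _; rewrite -powRD; last by rewrite addrC subrK oner_eq0.
by rewrite addrC subrK powRr1 // updX_ge0.
Qed.

Lemma Sv_opt_lt1 a b : alpha < 1 -> is_dist a -> 0 < Zs b ->
  Sv a b <= Zs b `^ alpha.
Proof.
move=> a1 da Z0; rewrite Sv_factor //.
rewrite -[leRHS]mulr1 ler_wpM2l ?powR_ge0 //.
exact: sum_amgm (updX_dist Z0) da.
Qed.

Lemma Sv_opt_gt1 a b : 1 < alpha -> is_dist a -> 0 < Zs b ->
  (forall x, 0 < ga b x -> 0 < a x) ->
  Zs b `^ alpha <= Sv a b.
Proof.
move=> a1 da Z0 h; rewrite Sv_factor //.
rewrite -[leLHS]mulr1 ler_wpM2l ?powR_ge0 //.
apply: sum_amgm_rev (updX_dist Z0) da _ => //.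
by move=> x; rewrite updXE pmulr_lgt0 ?invr_gt0 //; exact: h.
Qed.

End XY.
Section XY2.
Variable R : realType.
Variable alpha : R.
Variables (X Y : finType) (p : X -> Y -> R).
Hypothesis alpha0 : 0 < alpha.
Hypothesis alpha1 : alpha != 1.
Hypothesis p0 : forall x y, 0 <= p x y.

Lemma ga_mono_lt1 c b b' : alpha < 1 -> 0 < c -> (forall y, 0 <= b' y) ->
  (forall y, c * b' y <= b y) ->
  forall x, c `^ ((1 - alpha) / alpha) * ga alpha p b' x <= ga alpha p b x.
Proof.
move=> a1 c0 b'0 h x; rewrite /ga powRrM -powRM ?powR_ge0 ?Af_ge0 //.
apply: ge0_ler_powR; rewrite ?nnegrE ?invr_ge0 ?mulr_ge0 ?powR_ge0 ?Af_ge0 //;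
  first exact: ltW.
rewrite /Af mulr_sumr; apply: ler_sum => y _; rewrite mulrCA.
apply: ler_wpM2l; first exact: powR_ge0.
rewrite -powRM ?(ltW c0) //; apply: ge0_ler_powR; rewrite ?nnegrE.
- by rewrite subr_ge0 ltW.
- by rewrite mulr_ge0 // ltW.
- by apply: le_trans (h y); rewrite mulr_ge0 // ltW.
- exact: h.
Qed.

Lemma ga_mono_gt1 c C b b' : 1 < alpha -> 0 < c -> 0 < C ->
  (forall y, 0 <= b y) -> (forall y, 0 <= b' y) ->
  (forall x y, 0 < p x y -> 0 < b' y /\ c * b' y <= b y /\ b y <= C * b' y) ->
  forall x, C `^ ((1 - alpha) / alpha) * ga alpha p b' x <= ga alpha p b x /\
            ga alpha p b x <= c `^ ((1 - alpha) / alpha) * ga alpha p b' x.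
Proof.
move=> a1 c0 C0 b0 b'0 h x; have s0 : 1 - alpha < 0 by rewrite subr_lt0.
rewrite /ga !powRrM -!powRM ?powR_ge0 ?Af_ge0 //.
have ai : 0 <= alpha^-1 by rewrite invr_ge0 ltW.
split; apply: ge0_ler_powR => //;
  rewrite ?nnegrE ?mulr_ge0 ?powR_ge0 ?Af_ge0 //;
  rewrite /Af mulr_sumr; apply: ler_sum => y _;
  (case: (pselect (0 < p x y)) => [pxy|npxy];
   last by rewrite pxy_pow0 // !mul0r mulr0);
  have [b'y [cb bC]] := h x y pxy;
  have by0 : 0 < b y by apply: lt_le_trans cb; rewrite mulr_gt0.
- rewrite mulrCA; apply: ler_wpM2l; first exact: powR_ge0.
  by rewrite -powRM ?(ltW C0) //; apply: powR_antitone.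
- rewrite mulrCA; apply: ler_wpM2l; first exact: powR_ge0.
  by rewrite -powRM ?(ltW c0) //; apply: powR_antitone => //; rewrite mulr_gt0.
Qed.

End XY2.
Lemma alg1 (R : realType) (C Z Z' g : R) : Z != 0 -> Z' != 0 ->
  C * (Z' / Z) * (g / Z') = C * g / Z.
Proof. by move=> h1 h2; field; rewrite h1 h2. Qed.

Lemma alg2 (R : realType) (a q Z Z' g : R) : Z != 0 -> Z' != 0 -> q != 0 ->
  a * q * (Z' / Z) * q^-1 * (g / Z') = a * g / Z.
Proof. by move=> h1 h2 h3; field; rewrite h1 h2 h3. Qed.

Section Halves.
Variable R : realType.
Variable alpha : R.
Variables (X Y : finType) (p : X -> Y -> R).
Hypothesis alpha0 : 0 < alpha.
Hypothesis p0 : forall x y, 0 <= p x y.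

Lemma half_lt1 (b b' : Y -> R) (c sig : R) : 1 / 2 <= alpha -> alpha < 1 -> 0 < c -> c <= 1 ->
  (forall y, 0 <= b' y) -> (forall y, c * b' y <= b y) ->
  0 < Zs alpha p b -> 0 < sig -> sig * Zs alpha p b <= Zs alpha p b' ->
  forall x, c * sig * updX alpha p b' x <= updX alpha p b x.
Proof.
move=> ah a1 c0 c1 b'0 H Z0 sig0 hZ x.
have Z'0 : 0 < Zs alpha p b' by apply: lt_le_trans hZ; rewrite mulr_gt0.
have r1 : (1 - alpha) / alpha <= 1.
  rewrite ler_pdivrMr // mul1r lerBlDr -mulr2n -mulr_natr.
  by move: ah; rewrite ler_pdivrMr // mulrC.
have cr : c <= c `^ ((1 - alpha) / alpha).
  by apply: ger1_powR => //; rewrite c0.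
have g := ga_mono_lt1 p alpha0 a1 c0 b'0 H x.
rewrite 2!updXE.
set g' := ga alpha p b' x; set gg := ga alpha p b x.
set Z := Zs alpha p b; set Z' := Zs alpha p b'.
have g'0 : 0 <= g' by apply: ga_ge0.
have e1 : c * g' <= c `^ ((1 - alpha) / alpha) * g' := ler_wpM2r g'0 cr.
have e2 : sig / Z' <= Z^-1.
  rewrite ler_pdivrMr; last exact: Z'0.
  rewrite mulrC ler_pdivlMr; last exact: Z0.
  exact: hZ.
have e3 : c `^ ((1 - alpha) / alpha) * g' / Z <= gg / Z.
  by apply: ler_wpM2r g; rewrite invr_ge0 (ltW Z0).
apply: le_trans e3.
have -> : c * sig * (g' / Z') = (c * g') * (sig / Z') by rewrite mulrACA.
apply: le_trans (_ : c * g' * Z^-1 <= _).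
  by apply: ler_wpM2l e2; rewrite mulr_ge0 ?(ltW c0).
by apply: ler_wpM2r e1; rewrite invr_ge0 (ltW Z0).
Qed.

Lemma half_gt1 (b b' : Y -> R) (c Q : R) : 1 < alpha -> 0 < c -> 0 < Q ->
  (forall y, 0 <= b y) -> (forall y, 0 <= b' y) ->
  (forall x y, 0 < p x y -> 0 < b' y /\ c * b' y <= b y /\ b y <= c * Q * b' y) ->
  0 < Zs alpha p b -> 0 < Zs alpha p b' ->
  exists c1, 0 < c1 /\ forall x, c1 * updX alpha p b' x <= updX alpha p b x /\
      updX alpha p b x <= c1 * Q `^ (- ((1 - alpha) / alpha)) * updX alpha p b' x.
Proof.
move=> a1 c0 Q0 b0 b'0 H Z0 Z'0.
have C0 : 0 < c * Q := mulr_gt0 c0 Q0.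
have hg := ga_mono_gt1 alpha0 p0 a1 c0 C0 b0 b'0 H.
have Cr : 0 < (c * Q) `^ ((1 - alpha) / alpha) := powR_gt0 _ C0.
have ZZ : 0 < Zs alpha p b' / Zs alpha p b := divr_gt0 Z'0 Z0.
exists ((c * Q) `^ ((1 - alpha) / alpha) * (Zs alpha p b' / Zs alpha p b)); split.
  exact: mulr_gt0.
move=> x; have [h1 h2] := hg x; rewrite 2!updXE.
have Zn : Zs alpha p b != 0 := lt0r_neq0 Z0.
have Z'n : Zs alpha p b' != 0 := lt0r_neq0 Z'0.
have Zi : 0 <= (Zs alpha p b)^-1.
  rewrite invr_ge0; exact: (ltW Z0).
split.
  have -> : (c * Q) `^ ((1 - alpha) / alpha) * (Zs alpha p b' / Zs alpha p b) *
            (ga alpha p b' x / Zs alpha p b') =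
            (c * Q) `^ ((1 - alpha) / alpha) * ga alpha p b' x / Zs alpha p b.
    exact: (alg1 _ _ Zn Z'n).
  exact: (ler_wpM2r Zi h1).
have Qr : Q `^ ((1 - alpha) / alpha) != 0 := lt0r_neq0 (powR_gt0 _ Q0).
have -> : (c * Q) `^ ((1 - alpha) / alpha) * (Zs alpha p b' / Zs alpha p b) *
         Q `^ (- ((1 - alpha) / alpha)) * (ga alpha p b' x / Zs alpha p b') =
          c `^ ((1 - alpha) / alpha) * ga alpha p b' x / Zs alpha p b.
  rewrite powRM; [|exact: (ltW c0)|exact: (ltW Q0)].
  rewrite powRN; apply: alg2; [exact: Zn|exact: Z'n|exact: Qr].
exact: (ler_wpM2r Zi h2).
Qed.

End Halves.
Section Misc.
Variable R : realType.

Lemma geo_small (z e : R) : 0 <= z < 1 -> 0 < e -> exists k, z ^+ k < e.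
Proof.
move=> /andP[z0 z1] e0.
have : `|z| < 1 by rewrite ger0_norm.
move=> /cvg_expr/cvgr_dist_lt/(_ e e0) [N _ HN].
exists N; have := HN N (leqnn N); rewrite sub0r normrN ger0_norm //.
exact: exprn_ge0.
Qed.

Lemma ratio_le1 (T : finType) (u v : T -> R) c : is_dist u -> is_dist v ->
  (forall t, c * u t <= v t) -> c <= 1.
Proof.
move=> [u0 u1] [v0 v1] h; rewrite -v1 -[c]mulr1 -u1 mulr_sumr.
by apply: ler_sum => t _; apply: h.
Qed.

Lemma ratio_ge1 (T : finType) (u v : T -> R) C : is_dist u -> is_dist v ->
  (forall t, v t <= C * u t) -> 1 <= C.
Proof.
move=> [u0 u1] [v0 v1] h; rewrite -v1 -[C]mulr1 -u1 mulr_sumr.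
by apply: ler_sum => t _; apply: h.
Qed.

Lemma prod_pos_le (T : finType) (P : pred T) (f : T -> R) t0 :
  (forall t, P t -> 0 < f t <= 1) -> P t0 ->
  0 < \prod_(t | P t) f t /\ \prod_(t | P t) f t <= f t0.
Proof.
move=> h Pt0; split.
  by apply: prodr_gt0 => t /h /andP[].
rewrite (bigD1 t0) //= -[leRHS]mulr1; apply: ler_wpM2l.
  by have /andP[/ltW] := h t0 Pt0.
apply: prodr_ile1 => t /andP[Pt _]; have /andP[/ltW -> ->] := h t Pt.
by [].
Qed.

Lemma root_le (alpha rho u v : R) : 0 < alpha -> 0 <= rho -> 0 <= u -> 0 <= v ->
  rho * u `^ alpha <= v `^ alpha -> rho `^ alpha^-1 * u <= v.
Proof.
move=> a0 r0 u0 v0 h.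
have := @ge0_ler_powR R alpha^-1 _ (rho * u `^ alpha) (v `^ alpha).
rewrite -!powRrM !mulfV ?gt_eqF // !powRr1 // powRM ?powR_ge0 //.
rewrite -!powRrM !mulfV ?gt_eqF // !powRr1 //; apply.
- by rewrite invr_ge0 ltW.
- by rewrite nnegrE mulr_ge0 ?powR_ge0.
- by rewrite nnegrE powR_ge0.
- exact: h.
Qed.

End Misc.

Lemma geo_powR (R : realType) (Q0 rho t w : R) : 0 < Q0 -> 1 < rho -> 0 <= t < 1 -> 0 < w ->
  exists k, Q0 `^ (t ^+ k.+1 * w) <= rho.
Proof.
move=> Q0p r1 /andP[t0 t1] w0.
have rho0 : 0 < rho by apply: lt_trans r1.
have lr : 0 < ln rho by apply: ln_gt0.
set L := 1 + `|ln Q0|.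
have L0 : 0 < L by rewrite /L ltr_pwDl.
have eps0 : 0 < ln rho / (w * L) by rewrite divr_gt0 // mulr_gt0.
have t01 : 0 <= t < 1 by rewrite t0 t1.
have [k hk] := geo_small t01 eps0.
have hk0 : 0 <= t ^+ k by apply: exprn_ge0.
have hk1 : t ^+ k.+1 <= t ^+ k.
  by rewrite exprSr; apply: ler_piMr => //; apply: ltW.
have hk2 : t ^+ k.+1 < ln rho / (w * L) by apply: le_lt_trans hk1 hk.
exists k; rewrite /powR gt_eqF // -[leRHS]lnK ?posrE // ler_expR.
have e0 : 0 <= t ^+ k.+1 * w by rewrite mulr_ge0 ?exprn_ge0 // ltW.
apply: le_trans (_ : t ^+ k.+1 * w * L <= _).
  apply: ler_wpM2l => //; rewrite /L; apply: le_trans (ler_norm _) _.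
  by rewrite lerDr.
rewrite -mulrA -ler_pdivlMr; last by rewrite mulr_gt0.
exact: ltW.
Qed.
Section Main.
Variable R : realType.
Variables (X Y : finType) (alpha : R) (p : X -> Y -> R).
Hypothesis alpha0 : 0 < alpha.
Hypothesis alpha1 : alpha != 1.
Hypothesis p0 : forall x y, 0 <= p x y.

Definition pT : Y -> X -> R := fun y x => p x y.
Let pT0 : forall y x, 0 <= pT y x. Proof. by move=> y x; apply: p0. Qed.

Lemma updYE a : updY alpha p a = updX alpha pT a.
Proof. by []. Qed.

Lemma Sv_T a b : Sv alpha p a b = Sv alpha pT b a.
Proof.
rewrite /Sv exchange_big; apply: eq_bigr => y _; apply: eq_bigr => x _.
by rewrite /pT (mulrC (a x `^ _)).
Qed.

Definition good (a : X -> R) (b : Y -> R) :=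
  forall x y, 0 < p x y -> 0 < a x /\ 0 < b y.

Definition JJ (a : X -> R) (b : Y -> R) :=
  [/\ is_dist a, is_dist b & exists x y, [/\ 0 < p x y, 0 < a x & 0 < b y]].

Lemma Sv_ge0 a b : (forall x, 0 <= a x) -> (forall y, 0 <= b y) -> 0 <= Sv alpha p a b.
Proof.
by move=> a0 b0; apply: sumr_ge0 => x _; apply: sumr_ge0 => y _;
  rewrite !mulr_ge0 ?powR_ge0.
Qed.

Lemma sum_pair a b : (forall x, 0 <= a x) -> (forall y, 0 <= b y) ->
  \sum_(z : X * Y) p z.1 z.2 `^ alpha * (a z.1 * b z.2) `^ (1 - alpha)
  = Sv alpha p a b.
Proof.
move=> a0 b0; rewrite /Sv pair_bigA /=; apply: eq_bigr => z _.
by rewrite powRM.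
Qed.

Lemma renyi_eq a b : (forall x, 0 <= a x) -> (forall y, 0 <= b y) ->
  0 < Sv alpha p a b -> (1 < alpha -> good a b) ->
  renyiDXY alpha p a b = ((alpha - 1)^-1 * ln (Sv alpha p a b))%:E.
Proof.
move=> a0 b0 S0 g; rewrite /renyiDXY /renyiD.
case: ifP => [/andP[a1 /existsP[z /andP[pz]]]|_].
  have [ax bx] := g a1 z.1 z.2 pz.
  by rewrite mulf_eq0 !gt_eqF.
by rewrite /= sum_pair // gt_eqF.
Qed.

Lemma renyi_fin a b : (forall x, 0 <= a x) -> (forall y, 0 <= b y) ->
  renyiDXY alpha p a b != +oo%E ->
  0 < Sv alpha p a b /\ (1 < alpha -> good a b).
Proof.
move=> a0 b0; rewrite /renyiDXY /renyiD.
case: ifP => [_|H]; first by rewrite eqxx.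
rewrite /= sum_pair //; case: ifP => [_|Hs]; first by rewrite eqxx.
move=> _; split; first by rewrite lt_neqAle eq_sym Hs Sv_ge0.
move=> a1 x y pxy; move: H; rewrite a1 /= => /negbT/existsPn/(_ (x, y)).
rewrite /= pxy /= mulf_eq0 negb_or => /andP[ax bx].
by rewrite !lt_neqAle eq_sym ax eq_sym bx a0 b0.
Qed.

Notation tr := (ao_iter alpha p).

Lemma trS a b k : tr a b k.+1 =
  (updX alpha p (tr a b k).2, updY alpha p (updX alpha p (tr a b k).2)).
Proof. by rewrite /ao_iter iterS. Qed.

Lemma stepJ a b : JJ a b ->
  JJ (updX alpha p b) (updY alpha p (updX alpha p b)).
Proof.
case=> da [b0 b1] [x [y [pxy ax by0]]].
have Z0 := Zs_gt0 alpha b0 pxy by0.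
have a'x := updX_pos alpha b0 pxy by0.
have a'0 : forall x, 0 <= updX alpha p b x by move=> ?; apply: updX_ge0.
have pyx : 0 < pT y x by [].
have Z'0 := Zs_gt0 alpha a'0 pyx a'x.
split; first exact: updX_dist.
  by rewrite updYE; apply: updX_dist.
exists x, y; split => //; rewrite updYE.
exact: (updX_pos alpha a'0 pyx a'x).
Qed.

Lemma trJ a b : JJ a b -> forall k, JJ (tr a b k).1 (tr a b k).2.
Proof.
move=> h; elim=> [|k IH]; first exact: h.
by rewrite trS /=; exact: (stepJ IH).
Qed.

Lemma tr2_ge0 a b : (forall y, 0 <= b y) -> forall k y, 0 <= (tr a b k).2 y.
Proof.
move=> b0 [|k] y; first exact: b0.
by rewrite trS /= updYE; apply: updX_ge0.
Qed.

Lemma tr1_ge0 a b : (forall x, 0 <= a x) -> forall k x, 0 <= (tr a b k).1 x.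
Proof.
move=> a0 [|k] x; first exact: a0.
by rewrite trS /=; apply: updX_ge0.
Qed.

Lemma step_good a b : (forall y, 0 <= b y) -> good a b ->
  good (updX alpha p b) (updY alpha p (updX alpha p b)).
Proof.
move=> b0 g x y pxy; have [ax by0] := g x y pxy.
have a'x := updX_pos alpha b0 pxy by0.
have a'0 : forall x, 0 <= updX alpha p b x by move=> ?; apply: updX_ge0.
split => //; rewrite updYE.
by apply: (updX_pos alpha a'0 _ a'x).
Qed.

Lemma trgood a b : (forall y, 0 <= b y) -> good a b ->
  forall k, good (tr a b k).1 (tr a b k).2.
Proof.
move=> b0 g; elim=> [|k IH]; first exact: g.
rewrite trS /=; exact: (step_good (tr2_ge0 a b0 k) IH).
Qed.

Lemma JJ_Zs a b : JJ a b -> 0 < Zs alpha p b.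
Proof.
by case=> _ [b0 _] [x [y [pxy _ by0]]]; apply: (Zs_gt0 alpha b0 pxy by0).
Qed.

Lemma JJ_Sv a b : JJ a b -> 0 < Sv alpha p a b.
Proof.
case=> [[a0 _] [b0 _] [x [y [pxy ax by0]]]].
apply: lt_le_trans (_ : 0 < p x y `^ alpha * (a x `^ (1 - alpha) * b y `^ (1 - alpha))) _.
  by rewrite !mulr_gt0 ?powR_gt0.
rewrite /Sv (bigD1 x) //= (bigD1 y) //= -addrA lerDl.
rewrite addr_ge0 ?sumr_ge0 // => *; rewrite ?sumr_ge0 // => *;
  by rewrite !mulr_ge0 ?powR_ge0.
Qed.

Lemma Sh_eq a b k : JJ a b ->
  Sv alpha p (tr a b k.+1).1 (tr a b k).2 = Zs alpha p (tr a b k).2 `^ alpha.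
Proof.
move=> h; have hk := trJ h k; rewrite trS /=.
by apply: Sv_upd => //; apply: JJ_Zs hk.
Qed.

Lemma S_next_eq a b k : JJ a b ->
  Sv alpha p (tr a b k.+1).1 (tr a b k.+1).2 = Zs alpha pT (tr a b k.+1).1 `^ alpha.
Proof.
move=> h; have hk := trJ h k.+1; rewrite Sv_T {2}trS /= updYE.
apply: Sv_upd => //; case: hk => [[a0 _] _ [x [y [pxy ax _]]]].
by apply: (Zs_gt0 alpha a0 (_ : 0 < pT y x) ax).
Qed.






Definition S a b k := Sv alpha p (tr a b k).1 (tr a b k).2.
Definition Sh a b k := Sv alpha p (tr a b k.+1).1 (tr a b k).2.
Definition Dk a b k := renyiDXY alpha p (tr a b k).1 (tr a b k).2.

Lemma JJ_ZsT a b : JJ a b -> 0 < Zs alpha pT a.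
Proof.
case=> [[a0 _] _ [x [y [pxy ax _]]]].
exact: (Zs_gt0 alpha a0 (pxy : 0 < pT y x) ax).
Qed.

Lemma JJ_dist1 a b : JJ a b -> is_dist a. Proof. by case. Qed.
Lemma JJ_dist2 a b : JJ a b -> is_dist b. Proof. by case. Qed.

Lemma mono_lt1 a b k : alpha < 1 -> JJ a b ->
  S a b k <= Sh a b k /\ Sh a b k <= S a b k.+1.
Proof.
move=> a1 h; have hk := trJ h k; have hk1 := trJ h k.+1.
split.
  rewrite /Sh (Sh_eq k h).
  exact: (Sv_opt_lt1 alpha0 a1 (JJ_dist1 hk) (JJ_Zs hk)).
rewrite /S (S_next_eq k h) /Sh Sv_T.
exact: (Sv_opt_lt1 alpha0 a1 (JJ_dist2 hk) (JJ_ZsT hk1)).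
Qed.

Lemma mono_gt1 a b k : 1 < alpha -> JJ a b -> good a b ->
  S a b k.+1 <= Sh a b k /\ Sh a b k <= S a b k.
Proof.
move=> a1 h g; have hk := trJ h k; have hk1 := trJ h k.+1.
have b0 : forall y, 0 <= b y by case: (JJ_dist2 h).
have gk := trgood b0 g k.
split.
  rewrite /S (S_next_eq k h) /Sh Sv_T.
  apply: (Sv_opt_gt1 alpha0 a1 (JJ_dist2 hk) (JJ_ZsT hk1)).
  move=> y /(ga_gt0_supp alpha0 pT0) [x pyx].
  exact: (gk x y pyx).2.
rewrite /Sh (Sh_eq k h).
apply: (Sv_opt_gt1 alpha0 a1 (JJ_dist1 hk) (JJ_Zs hk)).
move=> x /(ga_gt0_supp alpha0 p0) [y pxy].
exact: (gk x y pxy).1.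
Qed.

Lemma D_S a b k : JJ a b -> (1 < alpha -> good a b) ->
  Dk a b k = ((alpha - 1)^-1 * ln (S a b k))%:E.
Proof.
move=> h g; have hk := trJ h k.
have b0 : forall y, 0 <= b y by case: (JJ_dist2 h).
apply: renyi_eq.
- by case: (JJ_dist1 hk).
- by case: (JJ_dist2 hk).
- exact: (JJ_Sv hk).
- by move=> a1; apply: trgood => //; apply: g.
Qed.

Lemma D_mono a b : JJ a b -> (1 < alpha -> good a b) ->
  forall k, (Dk a b k.+1 <= Dk a b k)%E.
Proof.
move=> h g k; rewrite (D_S k.+1 h g) (D_S k h g) lee_fin.
have S0 := JJ_Sv (trJ h k); have S1 := JJ_Sv (trJ h k.+1).
case: (ltP alpha 1) => a1.
  apply: ler_wnM2l.
    by rewrite invr_le0 subr_le0; apply: ltW.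
  rewrite ler_ln ?posrE; [|exact: S0|exact: S1].
  have [m1 m2] := mono_lt1 k a1 h; exact: le_trans m1 m2.
have a1' : 1 < alpha by rewrite lt_neqAle eq_sym alpha1.
apply: ler_wpM2l.
  by rewrite invr_ge0 subr_ge0.
rewrite ler_ln ?posrE; [|exact: S1|exact: S0].
have [m1 m2] := mono_gt1 k a1' h (g a1'); exact: le_trans m1 m2.
Qed.

Lemma powR_gt1 (rho e : R) : 1 < rho -> 0 < e -> 1 < rho `^ e.
Proof.
move=> r1 e0; rewrite /powR gt_eqF; last exact: lt_trans r1.
by rewrite -expR0 ltr_expR mulr_gt0 // ln_gt0.
Qed.

Lemma le_eqs (x y x' y' : R) : x = x' -> y = y' -> x <= y -> x' <= y'.
Proof. by move=> -> ->. Qed.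

Lemma trS1 a b k : (tr a b k.+1).1 = updX alpha p (tr a b k).2.
Proof. by rewrite trS. Qed.
Lemma trS2 a b k : (tr a b k.+1).2 = updX alpha pT (tr a b k.+1).1.
Proof. by rewrite trS. Qed.

Lemma core_lt1 a b a' b' rho : 1 / 2 <= alpha -> alpha < 1 ->
  JJ a b -> (forall y, 0 < b y) -> JJ a' b' -> 1 < rho ->
  (forall k, rho * S a b k <= Sv alpha p a' b') -> False.
Proof.
move=> ah a1 h bpos h' r1 hS.
set T := Sv alpha p a' b'.
have rho0 : 0 <= rho by apply: ltW; apply: lt_trans r1.
have primed : forall k, T <= S a' b' k /\ T <= Sh a' b' k.
  elim=> [|k [IH1 IH2]].
    have [m1 _] := mono_lt1 0 a1 h'.
    by split; [exact: le_refl | exact: m1].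
  have [_ m2] := mono_lt1 k a1 h'; have [m3 _] := mono_lt1 k.+1 a1 h'.
  have e1 : T <= S a' b' k.+1 by apply: le_trans IH2 m2.
  by split; [exact: e1 | apply: le_trans e1 m3].
have unprimed : forall k, rho * Sh a b k <= T.
  move=> k; apply: le_trans (hS k.+1).
  have [_ m2] := mono_lt1 k a1 h.
  exact: (ler_wpM2l rho0 m2).
set sig := rho `^ alpha^-1.
have sig1 : 1 < sig by apply: powR_gt1 => //; rewrite invr_gt0.
have sig0 : 0 < sig by apply: lt_trans sig1.
have ZX : forall k, sig * Zs alpha p (tr a b k).2 <= Zs alpha p (tr a' b' k).2.
  move=> k; apply: (root_le alpha0 rho0 (Zs_ge0 _ _ _) (Zs_ge0 _ _ _)).
  apply: (le_eqs _ (Sh_eq k h') (le_trans (unprimed k) (primed k).2)).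
  by rewrite /Sh (Sh_eq k h).
have ZY : forall k, sig * Zs alpha pT (tr a b k.+1).1 <= Zs alpha pT (tr a' b' k.+1).1.
  move=> k; apply: (root_le alpha0 rho0 (Zs_ge0 _ _ _) (Zs_ge0 _ _ _)).
  apply: (le_eqs _ (S_next_eq k h') (le_trans (hS k.+1) (primed k.+1).1)).
  by rewrite /S (S_next_eq k h).
have [[b0 b1] [b'0 b'1]] : is_dist b /\ is_dist b'.
  by split; [exact: (JJ_dist2 h) | exact: (JJ_dist2 h')].
set c0 := \prod_(y | predT y) b y.
have [c0pos c0le] : 0 < c0 /\ forall y, c0 <= b y.
  have hb : forall y, predT y -> 0 < b y <= 1.
    by move=> y _; rewrite bpos /=; apply: dist_le1; split.
  have [y0|] := pselect (exists y : Y, True).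
    case: y0 => y0 _; split; first by have [] := prod_pos_le hb (isT : predT y0).
    by move=> y; have [] := prod_pos_le hb (isT : predT y).
  by move=> nY; split; [by rewrite /c0 prodr_gt0 // => y _; apply: bpos
                       | move=> y; exfalso; apply: nY; exists y].
set ss := sig * sig.
have inv : forall k y, c0 * ss ^+ k * (tr a' b' k).2 y <= (tr a b k).2 y.
  elim=> [|k IH] y.
    rewrite expr0 mulr1 /=; apply: le_trans (c0le y).
    by rewrite ler_piMr // ?(ltW c0pos) //; apply: dist_le1; split.
  have hk := trJ h k; have hk' := trJ h' k.
  have hk1 := trJ h k.+1; have hk1' := trJ h' k.+1.
  set c := c0 * ss ^+ k.
  have cpos : 0 < c by rewrite /c mulr_gt0 // exprn_gt0 // mulr_gt0.
  have cle1 : c <= 1 := ratio_le1 (JJ_dist2 hk') (JJ_dist2 hk) IH.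
  have b'k0 : forall y, 0 <= (tr a' b' k).2 y by case: (JJ_dist2 hk').
  have hX := half_lt1 alpha0 ah a1 cpos cle1 b'k0 IH (JJ_Zs hk) sig0 (ZX k).
  have hX' : forall x, c * sig * (tr a' b' k.+1).1 x <= (tr a b k.+1).1 x := hX.
  have csig0 : 0 < c * sig by apply: mulr_gt0.
  have csle1 : c * sig <= 1 := ratio_le1 (JJ_dist1 hk1') (JJ_dist1 hk1) hX'.
  have a'k0 : forall x, 0 <= (tr a' b' k.+1).1 x by case: (JJ_dist1 hk1').
  have hY := half_lt1 alpha0 ah a1 csig0 csle1 a'k0 hX' (JJ_ZsT hk1) sig0 (ZY k).
  have -> : c0 * ss ^+ k.+1 = c * sig * sig by rewrite exprSr /c /ss !mulrA.
  exact: (hY y).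
have bnd : forall k, c0 * ss ^+ k <= 1.
  move=> k; apply: (ratio_le1 (JJ_dist2 (trJ h' k)) (JJ_dist2 (trJ h k))).
  exact: inv.
have ss1 : 1 < ss by rewrite /ss; nra.
have ss0 : 0 < ss by apply: lt_trans ss1.
have [k hk] : exists k, ss^-1 ^+ k < c0.
  apply: geo_small => //; rewrite invr_ge0 (ltW ss0) /=.
  by rewrite invf_lt1.
have e : c0 <= 1 / ss ^+ k.
  rewrite ler_pdivlMr; first exact: bnd.
  exact: exprn_gt0.
rewrite div1r -exprVn in e.
by have := lt_le_trans hk e; rewrite ltxx.
Qed.


Lemma core_gt1 a b a' b' rho : 1 < alpha ->
  JJ a b -> (forall x, 0 < a x) -> (forall y, 0 < b y) ->
  JJ a' b' -> good a' b' -> 1 < rho ->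
  exists k, S a b k <= rho * Sv alpha p a' b'.
Proof.
move=> a1 h apos bpos h' gp r1.
set T := Sv alpha p a' b'.
have T0 : 0 < T := JJ_Sv h'.
have [[b0 b1] [b'0 b'1]] : is_dist b /\ is_dist b'.
  by split; [exact: (JJ_dist2 h) | exact: (JJ_dist2 h')].
have g : good a b by move=> x y _; split; [exact: apos | exact: bpos].
have gk' := trgood b'0 gp.
have primed : forall k, S a' b' k <= T /\ Sh a' b' k <= T.
  elim=> [|k [IH1 IH2]].
    have [_ m1] := mono_gt1 0 a1 h' gp.
    by split; [exact: le_refl | exact: le_trans m1 (le_refl _)].
  have [m2 _] := mono_gt1 k a1 h' gp; have [_ m3] := mono_gt1 k.+1 a1 h' gp.
  have e1 : S a' b' k.+1 <= T by apply: le_trans m2 IH2.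
  by split; [exact: e1 | apply: le_trans m3 e1].
have s0 : 1 - alpha < 0 by rewrite subr_lt0.
have alpha0' : 0 < alpha := alpha0.
set r := (1 - alpha) / alpha.
have r0 : r < 0 by rewrite /r pmulr_llt0 // invr_gt0.
have rm1 : -1 < r.
  rewrite /r ltr_pdivlMr // mulN1r; lra.
set t := r * r.
have t01 : 0 <= t < 1 by apply/andP; split; rewrite /t; nra.
set c0 := \prod_(y | predT y) b y.
have [c0pos c0le] : 0 < c0 /\ forall y, c0 <= b y.
  have hb : forall y, predT y -> 0 < b y <= 1.
    by move=> y _; rewrite bpos /=; apply: dist_le1; split.
  case: h => _ _ [x0 [y0 _]].
  split; first by have [] := prod_pos_le hb (isT : predT y0).
  by move=> y; have [] := prod_pos_le hb (isT : predT y).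
set m := \prod_(y | 0 < b' y) b' y.
have hb' : forall y, 0 < b' y -> 0 < b' y <= 1.
  by move=> y hy; rewrite hy /=; apply: dist_le1; split.
have [m0 mle] : 0 < m /\ forall y, 0 < b' y -> m <= b' y.
  case: h' => _ _ [x0 [y0 [_ _ hy0]]].
  split; first by have [] := prod_pos_le hb' hy0.
  by move=> y hy; have [] := prod_pos_le hb' hy.
set Q0 := (c0 * m)^-1.
have Q0p : 0 < Q0 by rewrite /Q0 invr_gt0 mulr_gt0.
have inv : forall k, exists c, 0 < c /\ forall x y, 0 < p x y ->
    c * (tr a' b' k).2 y <= (tr a b k).2 y /\
    (tr a b k).2 y <= c * Q0 `^ (t ^+ k) * (tr a' b' k).2 y.
  elim=> [|k [c [cpos IH]]].
    exists c0; split => // x y pxy.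
    have b'y : 0 < b' y by have [] := gp x y pxy.
    rewrite expr0 powRr1; last exact: ltW.
    split.
      apply: le_trans (c0le y); rewrite ler_piMr //; first exact: ltW.
      by apply: dist_le1; split.
    have -> : c0 * Q0 = m^-1 by rewrite /Q0 invfM mulrA mulfV ?mul1r // gt_eqF.
    apply: le_trans (_ : 1 <= _); first by apply: dist_le1; split.
    apply: le_trans (_ : m^-1 * m <= _).
      by rewrite mulVf // gt_eqF.
    apply: ler_wpM2l; last exact: mle.
    by rewrite invr_ge0; apply: ltW.
  have hk := trJ h k; have hk' := trJ h' k.
  have hk1 := trJ h k.+1; have hk1' := trJ h' k.+1.
  set Q := Q0 `^ (t ^+ k).
  have Qp : 0 < Q by apply: powR_gt0.
  have bk0 : forall y, 0 <= (tr a b k).2 y by case: (JJ_dist2 hk).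
  have b'k0 : forall y, 0 <= (tr a' b' k).2 y by case: (JJ_dist2 hk').
  have H1 : forall x y, 0 < p x y -> 0 < (tr a' b' k).2 y /\
      c * (tr a' b' k).2 y <= (tr a b k).2 y /\ (tr a b k).2 y <= c * Q * (tr a' b' k).2 y.
    move=> x y pxy; have [l u] := IH x y pxy.
    by split; [exact: (gk' k x y pxy).2 | split].
  have [c1 [c1p hX]] := half_gt1 alpha0 p0 a1 cpos Qp bk0 b'k0 H1 (JJ_Zs hk) (JJ_Zs hk').
  have Qr : 0 < Q `^ (- r) by apply: powR_gt0.
  have ak0 : forall x, 0 <= (tr a b k.+1).1 x by case: (JJ_dist1 hk1).
  have a'k0 : forall x, 0 <= (tr a' b' k.+1).1 x by case: (JJ_dist1 hk1').
  have H2 : forall y x, 0 < pT y x -> 0 < (tr a' b' k.+1).1 x /\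
      c1 * (tr a' b' k.+1).1 x <= (tr a b k.+1).1 x /\
      (tr a b k.+1).1 x <= c1 * Q `^ (- r) * (tr a' b' k.+1).1 x.
    move=> y x pyx; have [l u] := hX x.
    by split; [exact: (gk' k.+1 x y pyx).1 | split].
  have [c2 [c2p hY]] := half_gt1 alpha0 pT0 a1 c1p Qr ak0 a'k0 H2 (JJ_ZsT hk1) (JJ_ZsT hk1').
  exists c2; split => // x y _.
  have eQ : (Q `^ (- r)) `^ (- ((1 - alpha) / alpha)) = Q0 `^ (t ^+ k.+1).
    rewrite /Q -!powRrM -/r; congr (_ `^ _).
    by rewrite exprSr /t; ring.
  have [l u] := hY y; split; first exact: l.
  by rewrite -eQ; exact: u.
have w0 : 0 < - (1 - alpha) by rewrite oppr_gt0.
have [k hk] := geo_powR Q0p r1 t01 w0.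
have [c [cpos HK]] := inv k.+1.
set Q := Q0 `^ (t ^+ k.+1).
have Qp : 0 < Q by apply: powR_gt0.
have hK := trJ h k.+1; have hK' := trJ h' k.+1.
have bK0 : forall y, 0 <= (tr a b k.+1).2 y by case: (JJ_dist2 hK).
have b'K0 : forall y, 0 <= (tr a' b' k.+1).2 y by case: (JJ_dist2 hK').
have cQ1 : 1 <= c * Q.
  apply: (ratio_ge1 (JJ_dist2 hK') (JJ_dist2 hK)) => y.
  case: (pselect (exists x, 0 < p x y)) => [[x pxy]|npy].
    exact: (HK x y pxy).2.
  have z : (tr a b k.+1).2 y = 0.
    change (updX alpha pT (tr a b k.+1).1 y = 0).
    apply: (updX_supp0 alpha0 pT0) => x pyx; apply: npy; exists x; exact: pyx.
  have H0 : 0 <= c * Q * (tr a' b' k.+1).2 y.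
    apply: mulr_ge0; last exact: b'K0.
    by apply: mulr_ge0; apply: ltW.
  exact: (le_eqs (esym z) (erefl _) H0).
have cinv : Q^-1 <= c.
  rewrite -[Q^-1]mul1r ler_pdivrMr; [exact: cQ1 | exact: Qp].
have CQ0 : 0 < c * Q by apply: mulr_gt0.
have H : forall x y, 0 < p x y -> 0 < (tr a' b' k.+1).2 y /\
    c * (tr a' b' k.+1).2 y <= (tr a b k.+1).2 y /\
    (tr a b k.+1).2 y <= c * Q * (tr a' b' k.+1).2 y.
  move=> x y pxy; have [l u] := HK x y pxy.
  by split; [exact: (gk' k.+1 x y pxy).2 | split].
have Zbound : Zs alpha p (tr a b k.+1).2 <= c `^ r * Zs alpha p (tr a' b' k.+1).2.
  rewrite /Zs mulr_sumr; apply: ler_sum => x _.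
  exact: (ga_mono_gt1 alpha0 p0 a1 cpos CQ0 bK0 b'K0 H x).2.
have step1 : Zs alpha p (tr a b k.+1).2 `^ alpha <=
             c `^ (1 - alpha) * Zs alpha p (tr a' b' k.+1).2 `^ alpha.
  have eq : c `^ (1 - alpha) * Zs alpha p (tr a' b' k.+1).2 `^ alpha =
            (c `^ r * Zs alpha p (tr a' b' k.+1).2) `^ alpha.
    rewrite (powRM _ (powR_ge0 _ _) (Zs_ge0 _ _ _)) -powRrM /r mulfVK //.
    exact: lt0r_neq0.
  rewrite eq; apply: ge0_ler_powR.
  - exact: ltW.
  - rewrite nnegrE; exact: Zs_ge0.
  - rewrite nnegrE; apply: mulr_ge0; [exact: powR_ge0 | exact: Zs_ge0].
  - exact: Zbound.
have e1 : Sh a b k.+1 = Zs alpha p (tr a b k.+1).2 `^ alpha := Sh_eq k.+1 h.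
have e2 : Sh a' b' k.+1 = Zs alpha p (tr a' b' k.+1).2 `^ alpha := Sh_eq k.+1 h'.
have i1 : S a b k.+2 <= Sh a b k.+1 := (mono_gt1 k.+1 a1 h g).1.
have i2 : Sh a b k.+1 <= c `^ (1 - alpha) * Sh a' b' k.+1 :=
  le_eqs (esym e1) (congr1 (fun z => c `^ (1 - alpha) * z) (esym e2)) step1.
have i3 : c `^ (1 - alpha) * Sh a' b' k.+1 <= c `^ (1 - alpha) * T :=
  ler_wpM2l (powR_ge0 _ _) (primed k.+1).2.
have i4 : c `^ (1 - alpha) <= Q0 `^ (t ^+ k.+1 * - (1 - alpha)).
  have -> : Q0 `^ (t ^+ k.+1 * - (1 - alpha)) = (Q^-1) `^ (1 - alpha).
    by rewrite -powR_inv1; [rewrite -!powRrM mulN1r | exact: ltW].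
  apply: powR_antitone s0 _ cinv.
  by rewrite invr_gt0.
have i5 : c `^ (1 - alpha) * T <= rho * T := ler_wpM2r (ltW T0) (le_trans i4 hk).
exists k.+2; exact: le_trans i1 (le_trans i2 (le_trans i3 i5)).
Qed.


Lemma Sv_witness a b : (forall x, 0 <= a x) -> (forall y, 0 <= b y) ->
  0 < Sv alpha p a b -> exists x y, [/\ 0 < p x y, 0 < a x & 0 < b y].
Proof.
move=> a0 b0 S0; apply: contrapT => hn.
have : Sv alpha p a b = 0.
  rewrite /Sv big1 // => x _; rewrite big1 // => y _.
  case: (pselect (0 < p x y)) => [pxy|npxy]; last by rewrite pxy_pow0 // mul0r.
  case: (pselect (0 < a x)) => [ax|nax].
    case: (pselect (0 < b y)) => [by0|nby].
      by exfalso; apply: hn; exists x, y.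
    have -> : b y = 0 by apply/eqP; rewrite eq_le b0 andbT leNgt; apply/negP.
    by rewrite powR0 ?mulr0 // subr_eq0 eq_sym.
  have -> : a x = 0 by apply/eqP; rewrite eq_le a0 andbT leNgt; apply/negP.
  by rewrite powR0 ?mul0r ?mulr0 // subr_eq0 eq_sym.
by move=> e; move: S0; rewrite e ltxx.
Qed.

End Main.

Lemma expR_gt1' (R : realType) (x : R) : 0 < x -> 1 < expR x.
Proof. by move=> x0; rewrite -expR0 ltr_expR. Qed.

Unset Implicit Arguments.

Theorem proposition7 (R : realType) (X Y : finType) (alpha : R)
  (p : X -> Y -> R) (qX0 : X -> R) (qY0 : Y -> R) :
  1 / 2 <= alpha -> alpha != 1 ->
  (forall x y, 0 <= p x y) -> \sum_(x : X) \sum_(y : Y) p x y = 1 ->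
  is_dist qX0 -> is_dist qY0 ->
  (forall x, 0 < qX0 x) -> (forall y, 0 < qY0 y) ->
  (fun k => renyiDXY alpha p (ao_iter alpha p qX0 qY0 k).1
                             (ao_iter alpha p qX0 qY0 k).2)
    @ \oo --> I_LP alpha p.
Proof.
move=> ah a1 p0 psum dX dY qXpos qYpos.
have alpha0 : 0 < alpha by apply: lt_le_trans ah; rewrite divr_gt0.
have [x0 [y0 pxy0]] : exists x y, 0 < p x y.
  apply: contrapT => hn.
  have : \sum_(x : X) \sum_(y : Y) p x y = 0.
    rewrite big1 // => x _; rewrite big1 // => y _.
    apply/eqP; rewrite eq_le p0 andbT leNgt; apply/negP => hp.
    by apply: hn; exists x, y.
  by rewrite psum => /eqP; rewrite oner_eq0.
have h : JJ p qX0 qY0 by split => //; exists x0, y0.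
have g : 1 < alpha -> good p qX0 qY0 by move=> _ x y _; split.
have mono := D_mono alpha0 a1 p0 h g.
have cv := ereal_nonincreasing_cvgn ((nonincreasing_seqP (Dk alpha p qX0 qY0)).1 mono).
suff -> : I_LP alpha p = ereal_inf (range (Dk alpha p qX0 qY0)) by exact: cv.
apply/eqP; rewrite eq_le; apply/andP; split.
  apply: le_ereal_inf_tmp => _ [k _ <-].
  apply: ereal_inf_lbound; exists (ao_iter alpha p qX0 qY0 k).1, (ao_iter alpha p qX0 qY0 k).2.
  have hk := trJ alpha h k.
  by split; [exact: (JJ_dist1 hk) | exact: (JJ_dist2 hk) | ].
apply: le_ereal_inf_tmp => d [a' [b' [da' db' ->]]].
have a'0 : forall x, 0 <= a' x by case: da'.
have b'0 : forall y, 0 <= b' y by case: db'.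
case: (eqVneq (renyiDXY alpha p a' b') +oo%E) => [->|hfin]; first exact: leey.
have [Sp gd] := renyi_fin a'0 b'0 hfin.
rewrite (renyi_eq a'0 b'0 Sp gd).
set T := Sv alpha p a' b'.
have [xw [yw [pw aw bw]]] := Sv_witness alpha0 a1 p0 a'0 b'0 Sp.
have h' : JJ p a' b' by split => //; exists xw, yw.
apply/lee_addgt0Pr => e e0.
have Sk0 : forall k, 0 < S alpha p qX0 qY0 k.
  by move=> k; apply: (JJ_Sv alpha (trJ alpha h k)).
suff [k hk] : exists k, (alpha - 1)^-1 * ln (S alpha p qX0 qY0 k) <=
                        (alpha - 1)^-1 * ln T + e.
  apply: ge_ereal_inf; exists (Dk alpha p qX0 qY0 k); first by exists k.
  by rewrite (D_S k h g) -EFinD lee_fin.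
case: (ltP alpha 1) => a1'.
  apply: contrapT => hn.
  have am0 : alpha - 1 < 0 by rewrite subr_lt0.
  set rho := expR ((1 - alpha) * e).
  have rho1 : 1 < rho by apply: expR_gt1'; rewrite mulr_gt0 // subr_gt0.
  apply: (core_lt1 alpha0 ah a1' h qYpos h' rho1) => k.
  have hk : (alpha - 1)^-1 * ln T + e < (alpha - 1)^-1 * ln (S alpha p qX0 qY0 k).
    by rewrite ltNge; apply/negP => hk; apply: hn; exists k.
  have inv1 : forall z, (alpha - 1) * ((alpha - 1)^-1 * z) = z.
    by move=> z; rewrite mulrA mulfV ?mul1r // lt_eqF.
  move: hk; rewrite -(ltr_nM2l am0) mulrDr !inv1 => hk.
  have hk2 : (1 - alpha) * e + ln (S alpha p qX0 qY0 k) < ln T by lra.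
  move: hk2; rewrite -ltr_expR expRD lnK ?posrE; last exact: Sk0.
  rewrite lnK ?posrE; last exact: Sp.
  by move=> H; apply: ltW.
have a1'' : 1 < alpha by rewrite lt_neqAle eq_sym a1.
set rho := expR ((alpha - 1) * e).
have rho1 : 1 < rho by apply: expR_gt1'; rewrite mulr_gt0 // subr_gt0.
have [k hk] := core_gt1 alpha0 p0 a1'' h qXpos qYpos h' (gd a1'') rho1.
exists k.
have am0 : 0 < alpha - 1 by rewrite subr_gt0.
have inv1 : forall z, (alpha - 1) * ((alpha - 1)^-1 * z) = z.
  by move=> z; rewrite mulrA mulfV ?mul1r // gt_eqF.
rewrite -(ler_pM2l am0) mulrDr !inv1.
have : ln (S alpha p qX0 qY0 k) <= ln (rho * T).
  rewrite ler_ln ?posrE; [exact: hk | exact: Sk0 | ].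
  by apply: mulr_gt0; [exact: (lt_trans ltr01 rho1) | exact: Sp].
rewrite lnM ?posrE; [|exact: (lt_trans ltr01 rho1)|exact: Sp].
rewrite /rho expRK => H; lra.
Qed.
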